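(* Let $G=(N,E)$ be a finite DAG with influential set $S^{inf.}(G)=\{s_1,\dots,s_m\}$. Then there is a directed path in $G$ passing through all agents of $S^{inf.}(G)$ in increasing order of their progeny, i.e. visiting $s_m,s_{m-1},\dots,s_1$ in this order. In particular, for all $1\le i<j\le m$, there is a directed path from $s_j$ to $s_i$, i.e. $s_j\in P_{s_i}$.
   Context: In a DAG $G=(N,E)$ with $N=\{1,\dots,n\}$, $P_i$ is the set of nodes having a directed path to $i$ (including $i$), and $p_i=|P_i|$. Write $p_i\succ p_j$ if $p_i>p_j$, or $p_i=p_j$ and $i<j$. Node $i$ is influential if, in the graph obtained from $G$ by deleting all out-edges of $i$, $p_i\succ p_j$ holds for all $j\ne i$ (progeny measured in that modified graph). The influential set $S^{inf.}(G)=\{s_1,\dots,s_m\}$ consists of all influential nodes, indexed so that $p_{s_1}\succ p_{s_2}\succ\cdots\succ p_{s_m}$, with progeny measured in $G$. *)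

(* Defs.v *)
From mathcomp Require Import all_boot.
Set Implicit Arguments. Unset Strict Implicit. Unset Printing Implicit Defensive.

(* A directed graph on N = {0,...,n-1} (the paper's {1,...,n}) is an edge
   relation e : rel 'I_n, where e x y means there is an edge x -> y. *)

Definition acyclic (n : nat) (e : rel 'I_n) : Prop :=
  forall x y : 'I_n, e x y -> ~~ connect e y x.

Definition progeny_set (n : nat) (e : rel 'I_n) (i : 'I_n) : {set 'I_n} :=
  [set j | connect e j i].

Definition progeny (n : nat) (e : rel 'I_n) (i : 'I_n) : nat :=
  #|progeny_set e i|.

Definition psucc (n : nat) (e : rel 'I_n) (i j : 'I_n) : bool :=
  (progeny e j < progeny e i) || ((progeny e i == progeny e j) && (i < j)).

Definition del_out (n : nat) (e : rel 'I_n) (i : 'I_n) : rel 'I_n :=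
  fun x y => e x y && (x != i).

Definition influential (n : nat) (e : rel 'I_n) (i : 'I_n) : bool :=
  [forall j : 'I_n, (j != i) ==> psucc (del_out e i) i j].

Definition inf_set (n : nat) (e : rel 'I_n) : {set 'I_n} :=
  [set i | influential e i].

(* Main.v *)
Require Import Defs.
From mathcomp Require Import all_boot.

Lemma del_split (n : nat) (e : rel 'I_n) (b x y : 'I_n) :
  connect e x y ->
  (connect (del_out e b) x y \/ connect e b y) /\
  (connect (del_out e b) x y \/ connect (del_out e b) x b).
Proof.
move/connectP=> [p].
elim: p x => [|z p IH] x /=.
  by move=> _ ->; split; left.
move=> /andP[exz pz] ly.
have [IH1 IH2] := IH z pz ly.
case: (eqVneq x b) => [xb|xb].
  split; right; rewrite -xb; last exact: connect0.
  by apply/connectP; exists (z :: p) => //=; rewrite exz.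
have ed : del_out e b x z by rewrite /del_out exz xb.
split.
  case: IH1 => [h|h]; [left|right] => //.
  exact: connect_trans (connect1 ed) h.
case: IH2 => [h|h]; [left|right]; exact: connect_trans (connect1 ed) h.
Qed.

Lemma del_sub (n : nat) (e : rel 'I_n) (b x y : 'I_n) :
  connect (del_out e b) x y -> connect e x y.
Proof.
apply: connect_sub => u v /andP[h _]; exact: connect1.
Qed.

Lemma key (n : nat) (e : rel 'I_n) (a b : 'I_n) :
  b \in inf_set e -> psucc e a b -> connect e b a.
Proof.
rewrite inE => /forallP Hb Hab.
apply/negPn/negP => nba.
have ab : a != b by apply: contraNneq nba => ->; exact: connect0.
have := Hb a; rewrite ab /= /psucc.
have -> : progeny (del_out e b) b = progeny e b.
  rewrite /progeny /progeny_set; apply: eq_card => j; rewrite !inE.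
  apply/idP/idP; first exact: del_sub.
  by move=> h; case: (@del_split _ _ b _ _ h) => _ [].
have -> : progeny (del_out e b) a = progeny e a.
  rewrite /progeny /progeny_set; apply: eq_card => j; rewrite !inE.
  apply/idP/idP; first exact: del_sub.
  by move=> h; case: (@del_split _ _ b _ _ h) => [[]] // /(negP nba).
move: Hab; rewrite /psucc.
case: (ltngtP (progeny e b) (progeny e a)) => //= _.
by move=> h1 h2; move: (ltn_trans h1 h2); rewrite ltnn.
Qed.

Lemma build (n : nat) (e : rel 'I_n) (t : seq 'I_n) (x : 'I_n) :
  path (fun a b => connect e a b && (a != b)) x t ->
  exists p, path e x p /\ subseq t p.
Proof.
elim: t x => [|y t IH] x /=.
  by move=> _; exists [::].
move=> /andP[/andP[cxy nxy] pt].
have [p' [pp' sp']] := IH y pt.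
move/connectP: cxy => [q pq ly].
case/lastP: q pq ly => [|q0 z] pq ly.
  by rewrite /= in ly; rewrite ly eqxx in nxy.
rewrite last_rcons in ly; subst z.
exists (rcons q0 y ++ p'); split.
  by rewrite cat_path pq last_rcons pp'.
rewrite cat_rcons.
apply: subseq_trans (suffix_subseq q0 _).
by rewrite /= eqxx.
Qed.

Theorem mainTheorem4 (n : nat) (e : rel 'I_n) :
  acyclic e ->
  (forall t : seq 'I_n,
     perm_eq t (enum (inf_set e)) ->
     sorted (fun a b => psucc e b a) t ->
     exists w : seq 'I_n, sorted e w /\ subseq t w)
  /\
  (forall a b : 'I_n, a \in inf_set e -> b \in inf_set e ->
     psucc e a b -> b \in progeny_set e a).
Proof.
move=> _; split; last first.
  by move=> a b _ Hb Hab; rewrite inE; exact: key.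
move=> [|x t] Hp Hs; first by exists [::].
have Hall : all (mem (inf_set e)) (x :: t).
  by apply/allP => z; rewrite (perm_mem Hp) mem_enum.
have : path (fun a b => connect e a b && (a != b)) x t.
  apply: (sub_in_path _ Hall Hs) => u v Hu _ /= h.
  rewrite (@key _ _ _ _ Hu h) /=.
  apply/eqP => uv; move: h; rewrite uv /psucc ltnn eqxx ltnn.
  done.
move=> /build [p [pp sp]].
by exists (x :: p); split => //=; rewrite eqxx.
Qed.
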